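(* Let $\mathbb{F}_q$ be a finite field, $\mathcal{C}\subseteq\mathbb{F}_q^n$ a linear $[n,k]$ code with dual code $\mathcal{C}^\perp$, and $\mathbb{P}$ a poset on $[n]=\{1,\dots,n\}$ with dual poset $\widetilde{\mathbb{P}}$. Let $A=\{d_r^{\mathbb{P}}(\mathcal{C}):1\le r\le k\}$ and $B=\{n+1-d_s^{\widetilde{\mathbb{P}}}(\mathcal{C}^\perp):1\le s\le n-k\}$. Then $A$ and $B$ are disjoint and $[n]=A\cup B$.
   Context: The dual poset $\widetilde{\mathbb{P}}$ has $i\le_{\widetilde{\mathbb{P}}}j$ iff $j\le_{\mathbb{P}}i$. For $J\subseteq[n]$, $\langle J\rangle_{\mathbb{P}}=\{i:i\le_{\mathbb{P}}j\text{ for some }j\in J\}$, and similarly for $\widetilde{\mathbb{P}}$. For $u\in\mathbb{F}_q^n$, $\mathrm{supp}(u)=\{i:u_i\ne0\}$; for $D\subseteq\mathbb{F}_q^n$, $\mathrm{supp}(D)=\bigcup_{u\in D}\mathrm{supp}(u)$ and $w_{\mathbb{P}}(D)=|\langle\mathrm{supp}(D)\rangle_{\mathbb{P}}|$. The $r$-th generalized minimum $\mathbb{P}$-weight is $d_r^{\mathbb{P}}(\mathcal{C})=\min\{w_{\mathbb{P}}(D): D \text{ an } r\text{-dimensional subspace of }\mathcal{C}\}$, and $d_s^{\widetilde{\mathbb{P}}}(\mathcal{C}^\perp)=\min\{w_{\widetilde{\mathbb{P}}}(D): D \text{ an } s\text{-dimensional subspace of }\mathcal{C}^\perp\}$. 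*)

(* Defs.v *)
From HB Require Import structures.
From mathcomp Require Import all_boot all_order all_algebra.
Set Implicit Arguments. Unset Strict Implicit. Unset Printing Implicit Defensive.
Import GRing.Theory.
Local Open Scope ring_scope.

(* A poset on [n] = 'I_n (index i : 'I_n stands for coordinate i+1). *)
Definition is_poset n (le : rel 'I_n) : Prop :=
  [/\ reflexive le, antisymmetric le & transitive le].

Definition dual_rel n (le : rel 'I_n) : rel 'I_n := fun i j => le j i.

Definition ideal n (le : rel 'I_n) (J : {set 'I_n}) : {set 'I_n} :=
  [set i | [exists j in J, le i j]].

(* support of a subspace D (the row space of the matrix D) of F_q^n:
   union of the supports of all vectors u in D *)
Definition supp (F : finFieldType) n (D : 'M[F]_n) : {set 'I_n} :=
  [set i | [exists u : 'rV[F]_n, (u <= D)%MS && (u 0 i != 0)]].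

Definition pweight (F : finFieldType) n (le : rel 'I_n) (D : 'M[F]_n) : nat :=
  #|ideal le (supp D)|.

(* r-th generalized minimum P-weight of the code C (row space of C):
   minimum of w_P(D) over r-dimensional subspaces D of C.
   (Default value n is only used when no such D exists, i.e. never for 1 <= r <= dim C.) *)
Definition gen_weight (F : finFieldType) n (le : rel 'I_n) (C : 'M[F]_n) (r : nat) : nat :=
  \big[minn/n]_(D : 'M[F]_n | (D <= C)%MS && (\rank D == r)) pweight le D.

Definition dual_code (F : finFieldType) n (C : 'M[F]_n) : 'M[F]_n := kermx C^T.

(* Main.v *)
Require Import Defs.
From HB Require Import structures.
From mathcomp Require Import all_boot all_order all_algebra.
From mathcomp Require Import zify.
Set Implicit Arguments. Unset Strict Implicit. Unset Printing Implicit Defensive.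
Import GRing.Theory.

Lemma bigmin_leq (T : finType) (P : pred T) (f : T -> nat) m x :
  P x -> \big[minn/m]_(y | P y) f y <= f x.
Proof.
move=> Px; have: x \in index_enum T by rewrite mem_index_enum.
elim: (index_enum T) => // y s IH; rewrite big_cons inE.
case/orP=> [/eqP <-|xs]; first by rewrite Px geq_minl.
case: (P y); last exact: IH.
exact: leq_trans (geq_minr _ _) (IH xs).
Qed.

Lemma bigmin_att (T : finType) (P : pred T) (f : T -> nat) m :
  \big[minn/m]_(y | P y) f y = m \/ exists2 x, P x & \big[minn/m]_(y | P y) f y = f x.
Proof.
apply: (big_ind (fun v => v = m \/ exists2 x, P x & v = f x)); first by left.
  move=> a b ha hb; rewrite /minn; case: ifP => _; by [].
by move=> i Pi; right; exists i.
Qed.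

Section Gen.
Variables (F : finFieldType) (n : nat).

Definition E (S : {set 'I_n}) : 'M[F]_n := diag_mx (\row_i (if i \in S then 1%R else 0%R : F)).

Lemma subE (u : 'rV[F]_n) S : (u <= E S)%MS = [forall i, (i \notin S) ==> (u 0%R i == 0%R)].
Proof.
apply/idP/forallP => [/submxP[v ->] i|H].
  by rewrite mul_mx_diag !mxE; apply/implyP => /negPf->; rewrite mulr0.
apply/submxP; exists u; apply/rowP => i; rewrite mul_mx_diag !mxE.
case: ifP => hi; rewrite ?mulr1 // mulr0.
by move: (H i); rewrite hi /= => /eqP.
Qed.

Lemma subEP m (A : 'M[F]_(m, n)) (S : {set 'I_n}) : reflect (forall i j, j \notin S -> A i j = 0%R) (A <= E S)%MS.
Proof.
apply: (iffP row_subP) => [H i j hj | H i].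
  by move: (H i); rewrite subE => /forallP/(_ j); rewrite hj /= mxE => /eqP.
rewrite subE; apply/forallP => j; apply/implyP => hj; by rewrite mxE H.
Qed.

Lemma subEC m (A : 'M[F]_(m, n)) (S : {set 'I_n}) : (A <= E (~: S))%MS = (A *m E S == 0)%R.
Proof.
apply/subEP/eqP => [H|H i j].
  apply/matrixP => i j; rewrite mul_mx_diag !mxE.
  by case: ifP => hj; rewrite ?mulr0 ?mulr1 // H // inE hj.
rewrite inE negbK => hj; move/matrixP: H => /(_ i j).
by rewrite mul_mx_diag !mxE hj mulr1.
Qed.

Lemma supp_subE (D : 'M[F]_n) (S : {set 'I_n}) : (D <= E S)%MS = (supp D \subset S).
Proof.
apply/idP/idP => [DS|/subsetP H].
  apply/subsetP => i; rewrite inE => /existsP[u /andP[uD ui]].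
  apply: contraR ui => hi; rewrite ?negbK; apply/eqP.
  by move/subEP: (submx_trans uD DS) => /(_ ord0 i hi).
apply/subEP => i j hj; apply/eqP; apply: contraR hj => nz; rewrite ?negbK.
apply: H; rewrite inE; apply/existsP; exists (row i D); rewrite row_sub mxE nz.
by [].
Qed.

Lemma rankE_le (S : {set 'I_n}) : \rank (E S) <= #|S|.
Proof.
pose Q : 'M[F]_(#|S|, n) := (\matrix_(k, j) ((j == enum_val k)%:R))%R.
have : (E S <= Q)%MS.
  apply/row_subP => i; case: (boolP (i \in S)) => hi.
    have -> : row i (E S) = row (enum_rank_in hi i) Q.
      by apply/rowP => j; rewrite !mxE enum_rankK_in // hi eq_sym.
    exact: row_sub.
  have -> : row i (E S) = 0%R by apply/rowP => j; rewrite !mxE (negPf hi) mul0rn.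
  exact: sub0mx.
move/mxrankS => h; exact: leq_trans h (rank_leq_row _).
Qed.

Lemma rankE (S : {set 'I_n}) : @eq nat (\rank (E S)) #|S|.
Proof.
have h1 := rankE_le S; have h2 := rankE_le (~: S).
have e : (E S + E (~: S) = 1%:M)%R.
  apply/matrixP => i j; rewrite !mxE inE.
  by case: (i \in S) => /=; rewrite ?mul0rn ?addr0 ?add0r.
have : ((1%:M)%R <= E S + E (~: S))%MS by rewrite -{1}e; apply: addmx_sub_adds.
move/mxrankS; rewrite mxrank1 => h3.
have h4 := (mxrank_adds_leqif (E S) (E (~: S))).1.
have h5 := cardsC S; rewrite card_ord in h5.
lia.
Qed.

Lemma ESS (S T : {set 'I_n}) : S \subset T -> (E S <= E T)%MS.
Proof.
move=> ST; apply/subEP => i j hj; rewrite !mxE.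
have hjS : j \notin S by apply: contra hj; apply: (subsetP ST).
by case: eqP => [->|]; [rewrite (negPf hjS) mul0rn | rewrite mulr0n].
Qed.

End Gen.

Definition downc n (le : rel 'I_n) (I : {set 'I_n}) :=
  forall i j, le i j -> j \in I -> i \in I.

Section Code.
Variables (F : finFieldType) (n : nat) (le : rel 'I_n).
Hypotheses (lerefl : reflexive le) (letrans : transitive le).
Variable C : 'M[F]_n.

Lemma ideal_downc J : downc le (ideal le J).
Proof.
move=> i j hij; rewrite !inE => /existsP[x /andP[xJ jx]].
by apply/existsP; exists x; rewrite xJ (letrans hij jx).
Qed.

Lemma sub_ideal (J : {set 'I_n}) : J \subset ideal le J.
Proof. by apply/subsetP => j hj; rewrite inE; apply/existsP; exists j; rewrite hj lerefl. Qed.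

Lemma ideal_min (J I : {set 'I_n}) : downc le I -> J \subset I -> ideal le J \subset I.
Proof.
move=> dI /subsetP JI; apply/subsetP => i; rewrite inE => /existsP[x /andP[xJ ix]].
exact: dI ix (JI _ xJ).
Qed.

Definition Cs (S : {set 'I_n}) := (C :&: E F S)%MS.

Lemma gw_le (D : 'M[F]_n) r : (D <= C)%MS -> \rank D = r -> gen_weight le C r <= pweight le D.
Proof. by move=> DC rD; apply: bigmin_leq; rewrite DC rD eqxx. Qed.

Lemma gw_ideal r : r <= \rank C ->
  exists I, [/\ downc le I, #|I| = gen_weight le C r & r <= \rank (Cs I)].
Proof.
move=> hr; case: (bigmin_att (fun D : 'M[F]_n => (D <= C)%MS && (\rank D == r)) (pweight le) n).
  move=> e; exists setT; split.
  - by move=> i j _ _; rewrite inE.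
  - by rewrite cardsT card_ord /gen_weight e.
  - apply: leq_trans hr (mxrankS _); rewrite sub_capmx submx_refl /=.
    by apply/subEP => i j; rewrite inE.
move=> [D /andP[DC /eqP rD] e]; exists (ideal le (supp D)); split.
- exact: ideal_downc.
- by rewrite /gen_weight e.
- rewrite -rD; apply: mxrankS; rewrite sub_capmx DC supp_subE.
  exact: sub_ideal.
Qed.

Lemma ideal_gw r (I : {set 'I_n}) : downc le I -> r <= \rank (Cs I) -> gen_weight le C r <= #|I|.
Proof.
move=> dI hr.
have rn : r <= n by apply: leq_trans hr (rank_leq_col _).
pose D : 'M[F]_n := ((pid_mx r : 'M[F]_(n, \rank (Cs I))) *m row_base (Cs I))%R.
have DCs : (D <= Cs I)%MS by rewrite -(eq_row_base (Cs I)); apply: submxMl.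
have rD : \rank D = r by rewrite mxrankMfree ?row_base_free // rank_pid_mx.
apply: leq_trans (gw_le (submx_trans DCs (capmxSl _ _)) rD) _.
apply: subset_leq_card; apply: ideal_min => //.
by rewrite -supp_subE; apply: submx_trans DCs (capmxSr _ _).
Qed.


Lemma gw_ge1 r : 1 <= r <= \rank C -> 1 <= gen_weight le C r.
Proof.
case/andP=> r1 rk; have [I [_ <- h]] := gw_ideal rk.
have := mxrankS (capmxSr C (E F I)); rewrite rankE -/(Cs I) => h2.
by apply: leq_trans r1 (leq_trans h h2).
Qed.

Lemma gw_len r : r <= \rank C -> gen_weight le C r <= n.
Proof.
move=> rk; have e : #|[set: 'I_n]| = n by rewrite cardsT card_ord.
rewrite -[X in _ <= X]e; apply: ideal_gw.
  by move=> i j _ _; rewrite inE.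
apply: leq_trans rk (mxrankS _); rewrite sub_capmx submx_refl /=.
by apply/subEP => i j; rewrite inE.
Qed.

Hypothesis leanti : antisymmetric le.

Lemma gw_incr r : r.+1 <= \rank C -> gen_weight le C r < gen_weight le C r.+1.
Proof.
move=> rk; have [I [dI <- h]] := gw_ideal rk.
have [i0 i0I] : exists i0, i0 \in I.
  apply/set0Pn; apply: contraTneq h => ->; rewrite -ltnNge ltnS.
  by apply: leq_trans (mxrankS (capmxSr C (E F set0))) _; rewrite rankE cards0.
pose bl i := #|[set j | le j i]|.
case: (@arg_maxnP _ i0 (mem I) bl i0I) => i iI imax.
have maxi : forall j, j \in I -> le i j -> j = i.
  move=> j jI ij; apply/eqP/negPn/negP => nji.
  have : bl i < bl j.
    apply: proper_card; apply/properP; split.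
      by apply/subsetP => x; rewrite !inE => xi; apply: letrans xi ij.
    exists j; rewrite !inE ?lerefl //; apply/negP => ji.
    by move/eqP: nji; apply; apply: leanti; rewrite ji ij.
  by move=> lt; have := imax j jI; rewrite /= leqNgt lt.
pose I' := I :\ i.
have dI' : downc le I'.
  move=> a b ab; rewrite !inE => /andP[bi bI]; rewrite (dI a b ab bI) andbT.
  by apply/eqP => ai; subst a; move/eqP: bi; apply; apply: maxi.
have cI := cardsD1 i I; have iI1 : (i \in I) = true by []; rewrite iI1 in cI.
have rI' : @eq nat (\rank (E F I')) #|I'| by rewrite rankE.
have rI : @eq nat (\rank (E F I)) #|I| by rewrite rankE.
have hsc : (\rank (Cs I + E F I')%MS + \rank (Cs I :&: E F I')%MS = \rank (Cs I) + \rank (E F I'))%N := mxrank_sum_cap _ _.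
have h1 : \rank (Cs I + E F I')%MS <= #|I|.
  rewrite -rI; apply: mxrankS; rewrite addsmx_sub capmxSr /=.
  by apply: ESS; apply/subsetP => x; rewrite inE => /andP[].
have h2 : \rank (Cs I :&: E F I')%MS <= \rank (Cs I').
  by apply: mxrankS; apply: capmxS => //; apply: capmxSl.
rewrite -/I' /= in cI.
have hr' : r <= \rank (Cs I').
  move: #|I'| #|I| cI h1 hsc rI' => p q cI h1 hsc rI'; lia.
have := ideal_gw dI' hr'; move: #|I'| #|I| cI => p q cI; lia.
Qed.

Lemma gw_mono a b : a < b -> b <= \rank C -> gen_weight le C a < gen_weight le C b.
Proof.
elim: b => // b IH; rewrite ltnS leq_eqVlt => /orP[/eqP ->|ab] bk.
  exact: gw_incr.
apply: ltn_trans (IH ab (ltnW bk)) (gw_incr bk).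
Qed.

End Code.

Lemma dual_rank (F : finFieldType) n (C : 'M[F]_n) (S : {set 'I_n}) :
  \rank (dual_code C :&: E F (~: S))%MS + \rank C = #|~: S| + \rank (C :&: E F S)%MS.
Proof.
pose K := kermx (row_mx C^T (E F S)).
have eK : forall m (A : 'M[F]_(m, n)), (A <= dual_code C :&: E F (~: S))%MS = (A <= K)%MS.
  by move=> m A; rewrite sub_capmx /dual_code !sub_kermx mul_mx_row row_mx_eq0 subEC.
have rK : \rank (dual_code C :&: E F (~: S))%MS = \rank K.
  apply/eqP; rewrite eqn_leq !mxrankS // ?eK // -eK //.
rewrite rK mxrank_ker.
have trE : (E F S)^T%R = E F S := tr_diag_mx _.
have e1 : \rank (row_mx C^T (E F S)) = \rank (col_mx C (E F S)).
  by rewrite -mxrank_tr tr_row_mx trmxK trE.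
have e2 : \rank (col_mx C (E F S)) = \rank (C + E F S)%MS by rewrite addsmxE.
have hsc : (\rank (C + E F S)%MS + \rank (C :&: E F S)%MS = \rank C + \rank (E F S))%N := mxrank_sum_cap _ _.
have hl := rank_leq_row (row_mx C^T (E F S)).
have hc := cardsC S; rewrite card_ord in hc.
have rS := rankE F S.
move: #|S| #|~: S| hc rS => p q hc rS.
lia.
Qed.
Unset Implicit Arguments.
Theorem theorem3 (F : finFieldType) (n k : nat) (C : 'M[F]_n)
  (le : rel 'I_n) :
  \rank C = k ->
  is_poset le ->
  let A := fun m : nat => exists2 r : nat, (1 <= r <= k)%N & m = gen_weight le C r in
  let B := fun m : nat => exists2 s : nat, (1 <= s <= n - k)%N &
             m = (n + 1 - gen_weight (dual_rel le) (dual_code C) s)%N in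
  (forall m : nat, ~ (A m /\ B m)) /\
  (forall m : nat, (1 <= m <= n)%N <-> (A m \/ B m)).
Proof.
move=> hk [lr la lt].
pose le' := dual_rel le.
have lr' : reflexive le' by move=> i; exact: lr.
have lt' : transitive le' by move=> y x z h1 h2; exact: lt h2 h1.
have la' : antisymmetric le' by move=> x y h; apply: la; rewrite andbC.
pose C' := dual_code C.
have hkn : k <= n by rewrite -hk rank_leq_col.
have hk' : \rank C' = n - k by rewrite /C' /dual_code mxrank_ker mxrank_tr hk.
have dC : forall J, downc le' J -> downc le (~: J).
  move=> J dJ a b ab; rewrite !inE; apply: contra => aJ; exact: dJ b a ab aJ.
have dC' : forall I, downc le I -> downc le' (~: I).
  move=> I dI a b ab; rewrite !inE; apply: contra => aI; exact: dI b a ab aI.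
have bA : forall r, 1 <= r <= k -> 1 <= gen_weight le C r <= n.
  move=> r /andP[r1 rk]; apply/andP; split.
    by apply: (gw_ge1 lr lt); rewrite hk r1 rk.
  by apply: gw_len; rewrite hk.
have bB : forall s, 1 <= s <= n - k -> 1 <= gen_weight le' C' s <= n.
  move=> s /andP[s1 sk]; apply/andP; split.
    by apply: (gw_ge1 lr' lt'); rewrite hk' s1 sk.
  by apply: gw_len; rewrite hk'.
have disj : forall r s, 1 <= r <= k -> 1 <= s <= n - k ->
    gen_weight le C r <> n + 1 - gen_weight le' C' s.
  move=> r s hr hs e.
  have := bB s hs; have := bA r hr => /andP[gr1 grn] /andP[gs1 gsn].
  case/andP: hr => r1 rk; case/andP: hs => s1 sk.
  have [J [dJ cJ hJ]] := gw_ideal lr' lt' (C:=C') (r:=s) (ltac:(rewrite hk'; exact sk)).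
  have [I0 [dI0 cI0 hI0]] := gw_ideal lr lt (C:=C) (r:=r) (ltac:(rewrite hk; exact rk)).
  have d1 := dual_rank C (~: J); rewrite setCK in d1.
  have d2 := dual_rank C I0.
  have u1 := ideal_gw (C := C) (r := r) (dC J dJ).
  have u2 := ideal_gw (C := C') (r := s) (dC' I0 dI0).
  have c1 := cardsC J; have c2 := cardsC I0; rewrite card_ord in c1 c2.
  rewrite /Cs in hJ hI0 u1 u2.
  rewrite -/C' hk in d1 d2.
  have {}d1 : (\rank (C' :&: E F J)%MS + k = #|J| + \rank (C :&: E F (~: J))%MS)%N := d1.
  have {}d2 : (\rank (C' :&: E F (~: I0))%MS + k = #|~: I0| + \rank (C :&: E F I0)%MS)%N := d2.
  move: #|J| #|~: J| #|I0| #|~: I0| cJ cI0 c1 c2 u1 u2 d1 d2 => pJ qJ pI qI cJ cI0 c1 c2 u1 u2 d1 d2.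
  case: (leqP r (\rank (C :&: E F (~: J)))%MS) => [/u1|] h1;
  case: (leqP s (\rank (C' :&: E F (~: I0)))%MS) => [/u2|] h2; lia.
pose SA := [seq gen_weight le C r | r <- iota 1 k].
pose SB := [seq n + 1 - gen_weight le' C' s | s <- iota 1 (n - k)].
have uA : uniq SA.
  rewrite map_inj_in_uniq ?iota_uniq // => a b; rewrite !mem_iota => /andP[a1 ak] /andP[b1 bk] e.
  case: (ltngtP a b) => // hab.
    have := gw_mono lr lt (C:=C) la hab (ltac:(rewrite hk; lia)); rewrite e ltnn //.
  have := gw_mono lr lt (C:=C) la hab (ltac:(rewrite hk; lia)); rewrite e ltnn //.
have uB : uniq SB.
  rewrite map_inj_in_uniq ?iota_uniq // => a b; rewrite !mem_iota => /andP[a1 ak] /andP[b1 bk] e.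
  have ha := bB a (ltac:(lia)); have hb := bB b (ltac:(lia)).
  case: (ltngtP a b) => // hab.
    have := gw_mono lr' lt' (C:=C') la' hab (ltac:(rewrite hk'; lia)); lia.
  have := gw_mono lr' lt' (C:=C') la' hab (ltac:(rewrite hk'; lia)); lia.
have uAB : uniq (SA ++ SB).
  rewrite cat_uniq uA uB andbT /=; apply/hasPn => x /mapP[s hs ->].
  apply/negP => /mapP[r hr e]; move: hr hs; rewrite !mem_iota => hr hs.
  by apply: (disj r s) => //; lia.
have sub : {subset SA ++ SB <= iota 1 n}.
  move=> x; rewrite mem_cat mem_iota => /orP[/mapP[r hr ->]|/mapP[s hs ->]].
    by rewrite mem_iota in hr; have := bA r (ltac:(lia)); lia.
  by rewrite mem_iota in hs; have := bB s (ltac:(lia)); lia.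
have [_ eqS] := uniq_min_size uAB sub (ltac:(rewrite size_cat !size_map !size_iota; lia)).
split.
  by move=> m [[r hr ->] [s hs e]]; exact: disj r s hr hs e.
move=> m; split.
  move=> hm; have : m \in iota 1 n by rewrite mem_iota; lia.
  rewrite -eqS mem_cat => /orP[/mapP[r hr ->]|/mapP[s hs ->]].
    by rewrite mem_iota in hr; left; exists r => //; lia.
  by rewrite mem_iota in hs; right; exists s => //; lia.
case=> [[r hr ->]|[s hs ->]]; first exact: bA.
by have := bB s hs; rewrite /le' /C'; lia.
Qed.
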